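(* For $n\ge1$ and $0\le k\le n-1$, the number of directed paths in $\Gamma$ from $(0,0)$ to $(n,k)$ satisfies $$\pi(n,k,0)=E_{n,k}=\sum_{r=0}^{\lfloor (k-1)/2\rfloor}(-1)^r\binom{k}{2r+1}E_{n-2r-1},$$ where the sum is empty (equal to $0$) when $k=0$.
   Context: Let $\Gamma$ be the directed graph whose nodes are the pairs $(n,k)$ of integers with $n\ge k\ge 0$, and whose edges are, for all $n\ge k\ge 0$: $(n+1,k)\to(n+1,k+1)$ and $(n,n-k)\to(n+1,k+1)$. $\pi(n,k,i)$ denotes the number of directed paths in $\Gamma$ from $(i,0)$ to $(n,k)$. A sequence $x_1,\ldots,x_m$ is down-up if $x_1>x_2<x_3>\cdots$. $E_n$ is the number of down-up permutations of $\{1,\ldots,n\}$ ($E_0=E_1=1$). The Entringer number $E_{n,k}$ ($n\ge k\ge 0$) is the number of down-up permutations of $\{1,\ldots,n+1\}$ whose first entry is $k+1$, with the convention $E_{0,0}=1$; equivalently $E_{0,0}=1$, $E_{n,0}=0$ for $n\ge1$, and $E_{n+1,k+1}=E_{n+1,k}+E_{n,n-k}$ for $n\ge k\ge0$. *)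

(* Defs.v *)
From mathcomp Require Import all_boot all_order all_algebra all_fingroup.
Set Implicit Arguments. Unset Strict Implicit. Unset Printing Implicit Defensive.

(* Edges of Gamma between nodes (a,b) -> (c,d):
   (m,k) -> (m,k+1)      for k < m      [i.e. (n+1,k)->(n+1,k+1), n >= k]
   (a,b) -> (a+1,d)      for 1 <= d <= a+1 and b = a-(d-1)
                          [i.e. (n,n-k)->(n+1,k+1), n >= k] *)
Definition gamma_edge (u v : nat * nat) : bool :=
  let: (a, b) := u in let: (c, d) := v in
  [&& c == a, d == b.+1 & b < a] || [&& c == a.+1, 0 < d, d <= c & b + d == c].

Definition gamma_node (u : nat * nat) : bool := u.2 <= u.1.

Definition gamma_path (i n k : nat) (p : seq (nat * nat)) : bool :=
  match p with
  | [::] => false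
  | x :: q => [&& x == (i, 0), last x q == (n, k), all gamma_node p
                & path gamma_edge x q]
  end.

Definition num_paths_is (n k i c : nat) : Prop :=
  exists s : seq (seq (nat * nat)),
    [/\ uniq s, forall p, p \in s = gamma_path i n k p & size s = c].

(* down-up: x_1 > x_2 < x_3 > ... *)
Definition downup (s : seq nat) : bool :=
  all (fun i => if odd i then nth 0 s i < nth 0 s i.+1
                else nth 0 s i.+1 < nth 0 s i) (iota 0 (size s).-1).

Definition euler_num (n : nat) : nat :=
  #|[set s : 'S_n | downup [seq (val (s i)).+1 | i <- enum 'I_n]]|.

(* Entringer numbers by the recurrence E_{0,0}=1, E_{n,0}=0 (n>=1),
   E_{n+1,k+1} = E_{n+1,k} + E_{n,n-k}  (meaningful for k <= n) *)
Fixpoint entringer (n : nat) : nat -> nat :=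
  match n with
  | 0 => fun k => if k == 0 then 1 else 0
  | m.+1 => fix g (k : nat) : nat :=
      match k with
      | 0 => 0
      | j.+1 => g j + entringer m (m - j)
      end
  end.

(* Main.v *)
Require Import Defs.
From mathcomp Require Import all_boot all_order all_algebra all_fingroup.
From mathcomp Require Import zify ring.
Import GRing.Theory.

Fixpoint gpaths (n : nat) : nat -> seq (seq (nat * nat)) :=
  match n with
  | 0 => fun k => if k == 0 then [:: [:: (0, 0)]] else [::]
  | m.+1 => fix g (k : nat) : seq (seq (nat * nat)) :=
      match k with
      | 0 => [::]
      | j.+1 => [seq rcons p (m.+1, j.+1) | p <- g j ++ gpaths m (m - j)]
      end
  end.

Lemma gpathsS m j : gpaths m.+1 j.+1 =
  [seq rcons p (m.+1, j.+1) | p <- gpaths m.+1 j ++ gpaths m (m - j)].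
Proof. by []. Qed.

Lemma entringerS m j : entringer m.+1 j.+1 = entringer m.+1 j + entringer m (m - j).
Proof. by []. Qed.

Lemma size_gpaths n k : size (gpaths n k) = entringer n k.
Proof.
elim: n k => [|m IHm] k; first by case: k.
elim: k => [//|j IHj].
by rewrite gpathsS entringerS size_map size_cat IHj IHm.
Qed.

Lemma edge_inv u n k : gamma_edge u (n, k) ->
  exists j, k = j.+1 /\ ((u = (n, j) /\ j < n) \/
    exists m, [/\ n = m.+1, u = (m, m - j) & j <= m]).
Proof.
case: u => a b /=; case/orP.
  case/and3P => /eqP -> /eqP -> H; exists b; split=> //; left; split=> //.
case/and4P => /eqP E kpos kle /eqP E2.
exists k.-1; split; first lia.
right; exists a; split => //; last lia.
congr (_, _); lia.
Qed.

Lemma gpath_inv i n k p : gamma_path i n k p ->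
  (p = [:: (i, 0)] /\ (n, k) = (i, 0)) \/
  exists p' u, [/\ p = rcons p' (n, k), gamma_path i u.1 u.2 p' & gamma_edge u (n, k)].
Proof.
case: p => [//|x q]; case/lastP: q => [|q v].
  by rewrite /= andbT => /and3P [/eqP -> /eqP -> _]; left.
rewrite /= last_rcons all_rcons rcons_path => /and4P [/eqP ex /eqP ev /andP [nx /andP [nv nq]] /andP [pq e]].
right; exists (x :: q), (last x q); split.
- by rewrite ev.
- by rewrite /= ex -surjective_pairing !eqxx /= nq -ex pq.
- by rewrite -ev.
Qed.

Lemma gpath_rcons i p u v : gamma_path i u.1 u.2 p -> gamma_edge u v ->
  gamma_node v -> gamma_path i v.1 v.2 (rcons p v).
Proof.
case: p => [//|x q] /=; rewrite last_rcons all_rcons rcons_path -!surjective_pairing.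
by case/and4P => -> /eqP -> /andP [-> ->] -> e nv; rewrite eqxx e nv.
Qed.

Lemma mem_gpaths n k p : k <= n -> (p \in gpaths n k) = gamma_path 0 n k p.
Proof.
elim: n k p => [|m IHm] k p.
  rewrite leqn0 => /eqP -> /=; rewrite inE; apply/eqP/idP.
    by move=> ->.
  case/gpath_inv => [[//]|[p' [u [_ _ /edge_inv [j [//]]]]]].
elim: k p => [|j IHj] p kle.
  apply/idP/idP => //=.
  case/gpath_inv => [[_ //]|[p' [u [_ _ /edge_inv [j [//]]]]]].
rewrite gpathsS; apply/idP/idP.
  case/mapP => q; rewrite mem_cat => /orP [] qin ->.
    apply: (@gpath_rcons 0 q (m.+1, j)) => //=.
      by rewrite -IHj // ltnW.
    by rewrite !eqxx kle.
  apply: (@gpath_rcons 0 q (m, m - j)) => //=.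
    by rewrite -IHm // leq_subr.
  rewrite !eqxx /= kle /=; apply/eqP; lia.
case/gpath_inv => [[_ [//]]|[p' [u [-> pp /edge_inv [j' [[<-]] H]]]]].
apply: map_f; rewrite mem_cat; case: H => [[Eu jl]|[m0 [Em Eu jl]]].
  by rewrite Eu in pp; rewrite IHj ?pp // ltnW.
case: Em => Em; subst m0; rewrite Eu in pp.
by rewrite (IHm _ _ (leq_subr _ _)) pp orbT.
Qed.

Lemma gpath_last i n k p : gamma_path i n k p -> last (i, 0) p = (n, k).
Proof. by case: p => [//|x q] /= /and3P [_ /eqP ->]. Qed.

Lemma uniq_gpaths n k : k <= n -> uniq (gpaths n k).
Proof.
elim: n k => [|m IHm] k; first by case: k.
elim: k => [//|j IHj] kle.
rewrite gpathsS map_inj_uniq; last exact: rcons_injl.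
rewrite cat_uniq IHj ?(ltnW kle) // IHm ?leq_subr // andbT.
apply/hasPn => q; rewrite mem_gpaths ?leq_subr // => /gpath_last E1.
rewrite mem_gpaths ?(ltnW kle) //; apply/negP => /gpath_last; rewrite E1 => -[E2].
move: kle; rewrite E2; lia.
Qed.

Lemma paths_part n k : k <= n -> num_paths_is n k 0 (entringer n k).
Proof.
move=> kle; exists (gpaths n k); split.
- exact: uniq_gpaths.
- by move=> p; rewrite mem_gpaths.
- exact: size_gpaths.
Qed.


Lemma entringerS' m j : entringer m.+1 j.+1 = entringer m.+1 j + entringer m (m - j).
Proof. by []. Qed.

Fixpoint gg (n : nat) : nat -> bool -> nat :=
  match n with
  | 0 => fun _ _ => 1
  | n'.+1 => fun j b => if b then \sum_(j <= i < n'.+1) gg n' i false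
                        else \sum_(0 <= i < j) gg n' i true
  end.

Lemma gg_sym n j : j <= n -> gg n j true = gg n (n - j) false.
Proof.
elim: n j => [|m IH] j jle //=.
rewrite -{1}(add0n j) big_addn.
rewrite big_nat_rev /=; apply: eq_big_nat => i /andP [_ hi].
rewrite IH; last lia.
congr gg; lia.
Qed.

Lemma gg_ent n k : k <= n -> gg n k false = entringer n k.
Proof.
elim: n k => [|m IHm] k; first by rewrite leqn0 => /eqP ->.
elim: k => [|k IHk] kle; first by rewrite /= big_geq.
rewrite entringerS' -IHk ?(ltnW kle) // -IHm ?leq_subr // -gg_sym; last lia.
by rewrite /= big_nat_recr.
Qed.

Lemma sum_rank_sorted (s : seq nat) x (f : nat -> nat) : sorted ltn s ->
  \sum_(y <- s | y < x) f (count (fun z => z < y) s) =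
  \sum_(0 <= i < count (fun z => z < x) s) f i.
Proof.
elim: s f => [|a s IH] f /=; first by rewrite big_nil big_geq.
move=> ps; have srt := path_sorted ps.
have alla := order_path_min ltn_trans ps.
have c0 : forall w, w <= a -> count (fun z => z < w) s = 0.
  move=> w wa; apply/eqP; rewrite -leqn0 leqNgt -has_count; apply/hasPn => z zs.
  by move/allP: alla => /(_ z zs) az; rewrite -leqNgt; apply: leq_trans wa (ltnW az).
rewrite big_cons ltnn add0n (c0 a (leqnn a)).
have E : \sum_(y <- s | y < x) f ((a < y) + count (fun z => z < y) s) =
         \sum_(y <- s | y < x) f (count (fun z => z < y) s).+1.
  rewrite big_seq_cond [RHS]big_seq_cond; apply: eq_bigr => y /andP [ys _].
  by move/allP: alla => /(_ y ys) ->.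
rewrite E (IH (fun c => f c.+1)) //.
case: (ltnP a x) => ax.
  by rewrite add1n big_nat_recl.
by rewrite c0 // add0n !big_geq.
Qed.

Lemma sum_rank_down (S : seq nat) x (f : nat -> nat) : uniq S ->
  \sum_(y <- S | y < x) f (count (fun z => z < y) S) =
  \sum_(0 <= i < count (fun z => z < x) S) f i.
Proof.
move=> U; have ps : perm_eq (sort leq S) S by rewrite perm_sort.
have Hc w : count (fun z => z < w) S = count (fun z => z < w) (sort leq S).
  by rewrite ((seq.permP ps) (fun z => z < w)).
rewrite -(perm_big _ ps) Hc -sum_rank_sorted; last first.
  by rewrite ltn_sorted_uniq_leq sort_uniq U (sort_sorted leq_total).
by apply: eq_bigr => y _; rewrite Hc.
Qed.

Lemma sum_rank_up (S : seq nat) x (f : nat -> nat) : uniq S -> x \notin S ->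
  \sum_(y <- S | x < y) f (count (fun z => z < y) S) =
  \sum_(count (fun z => z < x) S <= i < size S) f i.
Proof.
move=> U xS; set M := (\max_(y <- S) y).+1.
have cM : count (fun z => z < M) S = size S.
  rewrite -count_predT; apply: eq_in_count => y yS.
  by rewrite /= ltnS (@leq_bigmax_seq _ S xpredT (fun i => i) y yS isT).
have tot := @sum_rank_down S M f U; rewrite cM in tot.
rewrite (bigID (fun y => y < x)) /= in tot.
have e1 : \sum_(y <- S | (y < M) && (y < x)) f (count (fun z => z < y) S) =
          \sum_(y <- S | y < x) f (count (fun z => z < y) S).
  rewrite big_seq_cond [RHS]big_seq_cond; apply: eq_bigl => y.
  case yS: (y \in S) => //=.
  by rewrite /M ltnS (@leq_bigmax_seq _ S xpredT (fun i => i) y yS isT).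
have e2 : \sum_(y <- S | (y < M) && ~~ (y < x)) f (count (fun z => z < y) S) =
          \sum_(y <- S | x < y) f (count (fun z => z < y) S).
  rewrite big_seq_cond [RHS]big_seq_cond; apply: eq_bigl => y.
  case yS: (y \in S) => //=.
  rewrite /M ltnS (@leq_bigmax_seq _ S xpredT (fun i => i) y yS isT) /= -leqNgt leq_eqVlt.
  case: eqP => // E; by move: xS; rewrite E yS.
rewrite e1 e2 sum_rank_down // (big_cat_nat (leq0n _) (count_size (fun z => z < x) S)) in tot.
by apply/eqP; rewrite -(eqn_add2l (\sum_(0 <= i < count (fun z => z < x) S) f i)) tot.
Qed.

Fixpoint perms (n : nat) (S : seq nat) : seq (seq nat) :=
  match n with
  | 0 => [:: [::]]
  | n'.+1 => flatten [seq [seq y :: t | t <- perms n' (rem y S)] | y <- S]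
  end.

Fixpoint alt (b : bool) (x : nat) (l : seq nat) : bool :=
  if l is y :: t then (if b then x < y else y < x) && alt (~~ b) y t else true.

Lemma count_perms n (S : seq nat) x b : size S = n -> uniq S -> x \notin S ->
  count (alt b x) (perms n S) = gg n (count (fun z => z < x) S) b.
Proof.
elim: n S x b => [|n IH] S x b.
  by move/size0nil => -> .
move=> sz U xS /=.
rewrite count_flatten sumnE !big_map.
have E : forall y, y \in S ->
   count (alt b x) [seq y :: t | t <- perms n (rem y S)] =
   (if b then x < y else y < x) * gg n (count (fun z => z < y) S) (~~ b).
  move=> y yS; rewrite count_map.
  have -> : count (preim (cons y) (alt b x)) (perms n (rem y S)) =
            (if b then x < y else y < x) * count (alt (~~ b) y) (perms n (rem y S)).
    case Hc: (if b then x < y else y < x).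
      by rewrite mul1n; apply: eq_count => t /=; rewrite Hc.
    by rewrite mul0n -(count_pred0 (perms n (rem y S))); apply: eq_count => t /=; rewrite Hc.
  rewrite IH ?rem_uniq ?mem_rem_uniqF //; last by rewrite size_rem // sz.
  by rewrite count_rem ltnn andbF subn0.
rewrite big_seq; under eq_bigr => y yS do rewrite (E y yS).
rewrite -big_seq.
case: b {E} => /=.
  rewrite -sz -sum_rank_up // [RHS]big_mkcond /=; apply: eq_bigr => y _.
  by case: (x < y); rewrite ?mul1n ?mul0n.
rewrite -sum_rank_down // [RHS]big_mkcond /=; apply: eq_bigr => y _.
by case: (y < x); rewrite ?mul1n ?mul0n.
Qed.

Lemma mem_perms n (S : seq nat) t : size S = n ->
  (t \in perms n S) = perm_eq S t.
Proof.
elim: n S t => [|n IH] S t.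
  move/size0nil => ->; rewrite /= inE; apply/eqP/idP => [->//|].
  by rewrite perm_sym => /perm_nilP.
move=> sz; apply/flattenP/idP.
  case=> _ /mapP [y yS ->] /mapP [t' t'in ->].
  rewrite IH in t'in; last by rewrite size_rem // sz.
  by apply: (perm_trans (perm_to_rem yS)); rewrite perm_cons.
case: t => [|y t'] pe.
  by move: (perm_size pe); rewrite sz.
have yS : y \in S by rewrite (perm_mem pe) mem_head.
exists [seq y :: t0 | t0 <- perms n (rem y S)].
  by apply: (map_f (fun y => [seq y :: t0 | t0 <- perms n (rem y S)])).
apply: map_f; rewrite IH; last by rewrite size_rem // sz.
rewrite -(perm_cons y); apply: (perm_trans _ pe).
by rewrite perm_sym perm_to_rem.
Qed.

Lemma uniq_perms n (S : seq nat) : size S = n -> uniq S -> uniq (perms n S).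
Proof.
elim: n S => [|n IH] S sz U //=.
suff : forall s, uniq s -> {subset s <= S} ->
  uniq (flatten [seq [seq y :: t | t <- perms n (rem y S)] | y <- s]).
  by apply.
elim=> [//|a s IHs] /= /andP [aS' us] sub.
have aS : a \in S by apply: sub; rewrite mem_head.
rewrite cat_uniq map_inj_uniq; last by move=> ? ? [].
rewrite IH ?rem_uniq ?size_rem ?sz //= IHs //; last first.
  by move=> z zs; apply: sub; rewrite inE zs orbT.
rewrite andbT; apply/hasPn => t /flattenP [_ /mapP [y ys ->] /mapP [t' _ ->]].
apply/negP => /mapP [t'' _ [E _]].
by move: aS'; rewrite -E ys.
Qed.

Definition Dg (b : bool) (s : seq nat) : bool :=
  all (fun i => if odd i (+) b then nth 0 s i < nth 0 s i.+1
                else nth 0 s i.+1 < nth 0 s i) (iota 0 (size s).-1).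

Lemma downup_Dg s : downup s = Dg false s.
Proof. by rewrite /downup /Dg; apply: eq_all => i; rewrite addbF. Qed.

Lemma iota_succ m n : iota m.+1 n = map succn (iota m n).
Proof. by elim: n m => //= n IH m; rewrite IH. Qed.

Lemma Dg_alt t b x : Dg b (x :: t) = alt b x t.
Proof.
elim: t b x => [//|y t IH] b x.
rewrite /= -IH /Dg /= iota_succ all_map; congr (_ && _).
by apply: eq_all => i /=; rewrite addNb addbN.
Qed.

Definition S0 (m : nat) : seq nat := [seq (val i).+1 | i <- enum 'I_m].
Definition tS0 (m : nat) : m.-tuple nat := map_tuple (fun i : 'I_m => (val i).+1) (ord_tuple m).
Definition fS {m : nat} (s : 'S_m) : seq nat := [seq (val (s i)).+1 | i <- enum 'I_m].

Lemma fS_tuple m s : fS s = [tuple tnth (tS0 m) (s i) | i < m].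
Proof.
rewrite /fS /=; apply: eq_map => i.
by rewrite /tS0 tnth_map tnth_ord_tuple.
Qed.

Lemma fS_inj m : injective (@fS m).
Proof.
move=> s1 s2 /eq_in_map E; apply/permP => i.
by apply: val_inj; apply: succn_inj; apply: E; rewrite mem_enum.
Qed.

Lemma size_S0 m : size (S0 m) = m.
Proof. by rewrite size_map size_enum_ord. Qed.

Lemma uniq_S0 m : uniq (S0 m).
Proof.
rewrite map_inj_uniq ?enum_uniq // => i j /succn_inj; exact: val_inj.
Qed.

Lemma euler_count m : euler_num m = count downup (perms m (S0 m)).
Proof.
rewrite /euler_num cardE -(size_map (@fS m)) -size_filter; apply: perm_size.
apply: uniq_perm.
- by rewrite map_inj_uniq ?enum_uniq //; exact: fS_inj.
- by apply: filter_uniq; apply: uniq_perms; [exact: size_S0 | exact: uniq_S0].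
move=> l; rewrite mem_filter mem_perms ?size_S0 //; apply/mapP/idP.
  case=> s; rewrite mem_enum inE => du ->; rewrite du /=.
  by rewrite perm_sym; apply/(@tuple_permP _ _ _ (tS0 m)); exists s; rewrite fS_tuple.
case/andP => du; rewrite perm_sym => /(@tuple_permP _ _ _ (tS0 m)) [s E].
exists s; last by rewrite E fS_tuple.
by rewrite mem_enum inE -/(fS s) fS_tuple -E.
Qed.


Lemma euler_entringer m : euler_num m = entringer m m.
Proof.
rewrite euler_count.
have -> : count downup (perms m (S0 m)) = count (alt true 0) (perms m (S0 m)).
  apply: eq_in_count => l; rewrite mem_perms ?size_S0 // => pe.
  case: l pe => [//|y t] pe; rewrite downup_Dg Dg_alt /=.
  have : y \in S0 m by rewrite (perm_mem pe) mem_head.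
  by case/mapP => i _ ->.
rewrite count_perms ?size_S0 ?uniq_S0 //; last by apply/mapP => -[].
have -> : count (fun z => z < 0) (S0 m) = 0 by elim: (S0 m) => //= a s ->; rewrite ltn0.
by rewrite gg_sym // subn0 gg_ent.
Qed.

Local Open Scope ring_scope.



Definition Ez (m : nat) : int := (entringer m m)%:Z.
Definition T1 (n k r : nat) : int := (-1) ^+ r * ('C(k, (2 * r).+1))%:Z * Ez (n - (2 * r).+1).
Definition T0 (n k r : nat) : int := (-1) ^+ r * ('C(k, 2 * r))%:Z * Ez (n - 2 * r).
Definition F n k := \sum_(0 <= r < k.+1) T1 n k r.
Definition G n k := \sum_(0 <= r < k.+1) T0 n k r.

Lemma sumT1h n k N : ((k.+1)./2 <= N)%N ->
  \sum_(0 <= r < N) T1 n k r = \sum_(0 <= r < (k.+1)./2) T1 n k r.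
Proof.
move=> H; have Z : \sum_((k.+1)./2 <= r < N) T1 n k r = 0.
  apply: big1_seq => r /andP [_]; rewrite mem_index_iota => /andP [h _].
  rewrite /T1 bin_small ?mul0r ?mulr0 //.
  move: h; have := odd_double_half k.+1; rewrite -!muln2.
  move: (k.+1./2) (odd k.+1) => t b; case: b => /=; lia.
by rewrite (big_cat_nat (leq0n _) H) /= Z addr0.
Qed.

Lemma sumT1 n k N : (k.+1 <= N)%N -> \sum_(0 <= r < N) T1 n k r = F n k.
Proof.
move=> H; rewrite /F sumT1h ?sumT1h //; last first.
  by apply: leq_trans H; rewrite -{2}(odd_double_half k.+1) -muln2; lia.
by rewrite -{2}(odd_double_half k.+1) -muln2; lia.
Qed.

Lemma sumT0 n k N : (k.+1 <= N)%N -> \sum_(0 <= r < N) T0 n k r = G n k.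
Proof.
move=> H; have Z : \sum_(k.+1 <= r < N) T0 n k r = 0.
  apply: big1_seq => r /andP [_]; rewrite mem_index_iota => /andP [h _].
  rewrite /T0 bin_small ?mul0r ?mulr0 //; lia.
by rewrite (big_cat_nat (leq0n _) H) /= Z addr0.
Qed.

Lemma FG m k : F m.+1 k.+1 = F m.+1 k + G m k.
Proof.
rewrite -(@sumT1 m.+1 k k.+2 (leqnSn _)) -(@sumT0 m k k.+2 (leqnSn _)) -big_split /=.
apply: eq_bigr => r _; rewrite /T1 /T0 binS PoszD subSS; ring.
Qed.

Lemma GF m k : G m.+1 k.+1 = G m.+1 k - F m k.
Proof.
rewrite -(@sumT0 m.+1 k k.+2 (leqnSn _)) /G /F !(big_nat_recl k.+1 0) //.
rewrite -addrA; congr (_ + _); first by rewrite /T0 !muln0 !bin0.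
rewrite -sumrB; apply: eq_bigr => r _; rewrite /T0 /T1.
have -> : (2 * r.+1 = (2 * r).+2)%N by lia.
rewrite binS PoszD subSS exprS; ring.
Qed.

Lemma AB n : (forall k, (k < n)%N -> (entringer n k)%:Z = F n k) /\
             (forall k, (k < n)%N -> (entringer n (n - k))%:Z = G n k).
Proof.
elim: n => [|m [IHA IHB]]; first by split.
split.
  elim=> [|k IHk] kl.
    by rewrite /F big_nat1 /T1 bin_small.
  rewrite entringerS PoszD IHk ?(ltnW kl) // IHB; last lia.
  by rewrite FG.
elim=> [|k IHk] kl.
  by rewrite /G big_nat1 /T0 /Ez muln0 bin0 expr0 !mul1r.
have E := entringerS m (m - k).
have -> : (m.+1 - k.+1 = m - k)%N by lia.
have e1 : ((m - k).+1 = m.+1 - k)%N by lia.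
have e2 : (m - (m - k) = k)%N by lia.
rewrite e1 e2 in E.
rewrite GF -IHk ?(ltnW kl) // -IHA; last lia.
rewrite E PoszD; ring.
Qed.

Theorem proposition3 (n k : nat) :
  (1 <= n)%N -> (k <= n - 1)%N ->
  num_paths_is n k 0 (entringer n k) /\
  (entringer n k)%:Z =
    \sum_(r < k.+1./2)
      (-1) ^+ r * ('C(k, (2 * r).+1))%:Z * (euler_num (n - (2 * r).+1))%:Z.
Proof.
move=> n1 kn; have kl : (k < n)%N by lia.
split; first by apply: paths_part; lia.
rewrite (proj1 (AB n) k kl) /F (@sumT1h n k k.+1); last first.
  by rewrite -{2}(odd_double_half k.+1) -muln2; move: (odd _) (k.+1./2) => [] t; lia.
rewrite big_mkord; apply: eq_bigr => r _.
by rewrite /T1 /Ez euler_entringer.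
Qed.
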